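(* Let $R\subseteq\mathbb R$ be an archimedean real closed field and $\overline F$ a field with $R\subseteq\overline F\subseteq\mathbb R$. Then the map $\iota_{\overline F|R}:M(R(y))\to M(\overline F(y))$, $\zeta\mapsto\zeta_{\overline F}$, is a continuous injective map compatible with restriction. If $\overline F$ is real closed, then it is a homeomorphism onto $M(\overline F(y))$.
   Context: For a field $K$, $M(K)$ is the set of $\mathbb R$-places $K\to\mathbb R\cup\{\infty\}$, with topology generated by the subbasis $H'(b)=\{\zeta\in M(K)\mid \infty\ne\zeta(b)>0\}$, $b\in K$. Every $\zeta\in M(R(y))$ is the identity on $R$; its constant extension $\zeta_{\overline F}$ is the unique $\mathbb R$-place of $\overline F(y)$ which is the identity on $\overline F$ and satisfies $\zeta_{\overline F}(y)=\zeta(y)$. Compatible with restriction means $\zeta_{\overline F}|_{R(y)}=\zeta$. *)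

(* Defs.v *)
From HB Require Import structures.
From mathcomp Require Import all_boot all_order all_algebra.
From mathcomp Require Import Rstruct.
From mathcomp Require Import fraction.
Set Implicit Arguments. Unset Strict Implicit. Unset Printing Implicit Defensive.
Import Order.TTheory GRing.Theory Num.Theory.
Local Open Scope ring_scope.

Notation RR := Rdefinitions.R.

Notation "x %:F" := (@FracField.tofrac _ x) (format "x %:F").

(* R ∪ {∞} is modelled as [option RR], with [None] = ∞. *)

(* An R-place of a field K: a map K -> R ∪ {∞} which is a place, i.e.
   its finiteness domain O is a subring, the map is a ring morphism on O,
   and for a ≠ 0: ζ(a) = ∞ iff ζ(a^-1) = 0 (so O is a valuation ring and
   the kernel is its maximal ideal). *)
Definition is_Rplace (K : fieldType) (z : K -> option RR) : Prop :=
  [/\ z 0 = Some 0, z 1 = Some 1,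
      (forall a b r s, z a = Some r -> z b = Some s ->
          z (a + b) = Some (r + s) /\ z (a * b) = Some (r * s)) &
      (forall a, a != 0 -> (z a = None <-> z a^-1 = Some 0))].

Definition Mpl (K : fieldType) := {z : K -> option RR | is_Rplace z}.

Definition plv (K : fieldType) (z : Mpl K) : K -> option RR := proj1_sig z.

Definition Hsub (K : fieldType) (b : K) (z : Mpl K) : Prop :=
  exists r : RR, plv z b = Some r /\ (0 < r).

(* Open sets of the topology generated by the subbasis {H'(b) | b ∈ K}:
   every point has a basic neighbourhood (finite intersection of
   subbasic sets; the empty intersection being M(K)) inside the set. *)
Definition Mopen (K : fieldType) (U : Mpl K -> Prop) : Prop :=
  forall z, U z -> exists bs : seq K,
    (forall b, b \in bs -> Hsub b z) /\
    (forall w, (forall b, b \in bs -> Hsub b w) -> U w).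

Definition Mcontinuous (K L : fieldType) (f : Mpl K -> Mpl L) : Prop :=
  forall V : Mpl L -> Prop, Mopen V -> Mopen (fun z => V (f z)).

Definition yvar (k : idomainType) : {fraction {poly k}} := ('X)%:F.

Definition frac_map (k k' : idomainType) (f : {rmorphism k -> k'})
  (x : {fraction {poly k}}) : {fraction {poly k'}} :=
  let r := repr x in
  (map_poly f \n_r)%:F / (map_poly f \d_r)%:F.

(* The subfield F ⊆ R (via the embedding iF) is real closed: with the
   ordering induced from R it satisfies the real-closed (polynomial
   intermediate value) axiom, as in MathComp's rcfType. *)
Definition real_closed_sub (F : fieldType) (iF : {rmorphism F -> RR}) : Prop :=
  forall (p : {poly F}) (a b : F),
    (iF a <= iF b) -> ((map_poly iF p).[iF a] <= 0) ->
    (0 <= (map_poly iF p).[iF b]) ->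
    exists2 x : F, (iF a <= iF x <= iF b) & root p x.

(* Main.v *)
Require Import Defs.
From HB Require Import structures.
From mathcomp Require Import all_boot all_order all_algebra.
From mathcomp Require Import Rstruct.
From mathcomp Require Import fraction generic_quotient.
From mathcomp Require Import ring lra.
From mathcomp Require Import polyrcf.
From mathcomp Require reals.
From Stdlib Require Import ClassicalEpsilon ProofIrrelevance FunctionalExtensionality.
Set Implicit Arguments. Unset Strict Implicit. Unset Printing Implicit Defensive.
Import Order.TTheory GRing.Theory Num.Theory.
Local Open Scope ring_scope.


Lemma fracE (P : idomainType) (x : {fraction P}) :
  \d_(repr x) != 0 /\ x = (\n_(repr x))%:F / (\d_(repr x))%:F.
Proof.
have dn := denom_ratioP (repr x).
split=> //.
apply: (@mulIf _ ((\d_(repr x))%:F)); first by rewrite tofrac_eq0.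
rewrite divfK ?tofrac_eq0 //.
rewrite -{1}[x]reprK.
set r := repr x.
unlock FracField.tofrac.
rewrite -[_ * _]FracField.pi_mul.
apply/eqmodP => /=. rewrite FracField.equivfE /FracField.mulf /=.
by rewrite !(numer_Ratio, denom_Ratio) ?oner_neq0 ?mulr1 ?mulf_neq0 ?oner_neq0 // mulrC.
Qed.

Lemma fracP (P : idomainType) (x : {fraction P}) :
  exists n d, d != 0 /\ x = n%:F / d%:F.
Proof. have [h1 h2] := fracE x; by exists (\n_(repr x)), (\d_(repr x)). Qed.

Lemma frac_eqE (P : idomainType) (n d n' d' : P) : d != 0 -> d' != 0 ->
  n%:F / d%:F = n'%:F / d'%:F -> n * d' = n' * d.
Proof.
move=> d0 d'0 E; apply/eqP; rewrite -tofrac_eq !tofracM; apply/eqP.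
have hd : d%:F != 0 by rewrite tofrac_eq0.
have hd' : d'%:F != 0 by rewrite tofrac_eq0.
have := congr1 (fun u => u * d%:F * d'%:F) E.
by rewrite -!mulrA [d%:F * _]mulrC !mulrA !divfK // -!mulrA [d'%:F * _]mulrC
  !mulrA divfK.
Qed.

Definition is_fhom (K L : fieldType) (f : K -> L) :=
  [/\ f 0 = 0, f 1 = 1, {morph f : a b / a + b >-> a + b},
      {morph f : a b / a * b >-> a * b} & forall a, f a^-1 = (f a)^-1].

Lemma fhom_neq0 (K L : fieldType) (f : K -> L) : is_fhom f ->
  forall a, a != 0 -> f a != 0.
Proof.
case=> _ f1 _ fM fV a a0; apply/eqP => fa0.
have := fM a a^-1; rewrite mulfV // f1 fa0 mul0r => /eqP; by rewrite oner_eq0.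
Qed.

Lemma fhom_comp (K L M : fieldType) (f : K -> L) (g : L -> M) :
  is_fhom f -> is_fhom g -> is_fhom (g \o f).
Proof.
case=> f0 f1 fD fM fV [g0 g1 gD gM gV]; split.
- by rewrite /= f0 g0.
- by rewrite /= f1 g1.
- by move=> a b /=; rewrite fD gD.
- by move=> a b /=; rewrite fM gM.
- by move=> a /=; rewrite fV gV.
Qed.

Section Lift.
Variables (K L : fieldType) (h : {poly K} -> L).
Hypotheses (hD : {morph h : a b / a + b >-> a + b})
  (hM : {morph h : a b / a * b >-> a * b}) (h1 : h 1 = 1)
  (hinj : forall p, p != 0 -> h p != 0).

Definition liftf (x : {fraction {poly K}}) : L :=
  let r := repr x in h \n_r / h \d_r.

Lemma h0 : h 0 = 0.
Proof. have := hD 0 0; rewrite addr0 => /eqP; by rewrite -subr_eq subrr eq_sym => /eqP. Qed.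

Lemma liftE n d : d != 0 -> liftf (n%:F / d%:F) = h n / h d.
Proof.
move=> d0; rewrite /liftf; set x := n%:F / d%:F.
have [dr xE] := fracE x.
have E := frac_eqE d0 dr xE.
have := congr1 h E; rewrite !hM => E'.
have hd := hinj d0; have hdr := hinj dr.
apply: (@mulIf _ (h d)) => //; apply: (@mulIf _ (h \d_(repr x))) => //.
rewrite divfK // [_ / _ * _]mulrC mulrA divfK //.
by rewrite E' mulrC.
Qed.

Lemma lift_poly p : liftf (p%:F) = h p.
Proof. by rewrite -[p%:F]divr1 -tofrac1 liftE ?oner_neq0 // h1 divr1. Qed.

Lemma lift_fhom : is_fhom liftf.
Proof.
have hN : forall a, h (- a) = - h a.
  by move=> a; apply/eqP; rewrite -subr_eq0 opprK -hD addNr h0.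
split.
- by rewrite -tofrac0 lift_poly h0.
- by rewrite -tofrac1 lift_poly h1.
- move=> x x'; have [n [d [d0 ->]]] := fracP x; have [n' [d' [d'0 ->]]] := fracP x'.
  have hd := hinj d0; have hd' := hinj d'0.
  have D0 : d * d' != 0 by rewrite mulf_neq0.
  rewrite addf_div ?tofrac_eq0 // -!tofracM -tofracD !liftE // hD !hM.
  by rewrite addf_div.
- move=> x x'; have [n [d [d0 ->]]] := fracP x; have [n' [d' [d'0 ->]]] := fracP x'.
  have D0 : d * d' != 0 by rewrite mulf_neq0.
  by rewrite mulf_div -!tofracM !liftE // !hM mulf_div.
- move=> x; have [n [d [d0 ->]]] := fracP x.
  have [->|n0] := eqVneq n 0.
    by rewrite tofrac0 !mul0r invr0 -tofrac0 lift_poly h0 invr0.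
  have -> : (n%:F / d%:F)^-1 = d%:F / n%:F by rewrite invf_div.
  by rewrite !liftE // invf_div.
Qed.

End Lift.


Section Place.
Variables (K : fieldType) (z : K -> option RR).
Hypothesis zP : is_Rplace z.

Lemma pl0 : z 0 = Some 0. Proof. by case: zP. Qed.
Lemma pl1 : z 1 = Some 1. Proof. by case: zP. Qed.
Lemma plD a b r s : z a = Some r -> z b = Some s -> z (a + b) = Some (r + s).
Proof. by case: zP => _ _ H _ ha hb; case: (H _ _ _ _ ha hb). Qed.
Lemma plM a b r s : z a = Some r -> z b = Some s -> z (a * b) = Some (r * s).
Proof. by case: zP => _ _ H _ ha hb; case: (H _ _ _ _ ha hb). Qed.
Lemma plV a : a != 0 -> (z a = None <-> z a^-1 = Some 0).
Proof. by case: zP => _ _ _ H; apply: H. Qed.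

Lemma pl_neq0 a r : z a = Some r -> r != 0 -> a != 0.
Proof. by move=> ha r0; apply/eqP => a0; move: ha; rewrite a0 pl0 => -[] /eqP; rewrite eq_sym (negbTE r0). Qed.

Lemma pl_inv_some a r : z a = Some r -> r != 0 -> z a^-1 = Some r^-1.
Proof.
move=> ha r0; have a0 := pl_neq0 ha r0.
case E: (z a^-1) => [s|]; last first.
  have := (plV (invr_neq0 a0)).1 E; rewrite invrK ha => -[] r0'.
  by rewrite r0' eqxx in r0.
have := plM ha E; rewrite mulfV // pl1 => -[] rs.
by congr Some; rewrite -(mulKf r0 s) -rs mulr1.
Qed.

Lemma pl_inv_none a : z a = None -> z a^-1 = Some 0.
Proof.
move=> ha; have a0 : a != 0 by apply/eqP => a0; rewrite a0 pl0 in ha.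
exact: (plV a0).1.
Qed.

Lemma pl_inv0 a : a != 0 -> z a = Some 0 -> z a^-1 = None.
Proof. by move=> a0 ha; apply/(plV (invr_neq0 a0)); rewrite invrK. Qed.

Lemma plN1 : z (-1) = Some (-1).
Proof.
case E: (z (-1)) => [s|].
  have := plD pl1 E; rewrite subrr pl0 => -[] s0.
  by congr Some; apply/eqP; rewrite -subr_eq0 opprK addrC -s0.
have := pl_inv_none E; rewrite invrN invr1 E => //.
Qed.

Lemma plN a r : z a = Some r -> z (- a) = Some (- r).
Proof. by move=> ha; rewrite -mulN1r (plM plN1 ha) mulN1r. Qed.

Lemma plB a b r s : z a = Some r -> z b = Some s -> z (a - b) = Some (r - s).
Proof. by move=> ha hb; apply: plD ha (plN hb). Qed.

Lemma pl_none_add a b s : z a = None -> z b = Some s -> z (a + b) = None.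
Proof.
move=> ha hb; case E: (z (a + b)) => [r|] //.
by have := plB E hb; rewrite addrK ha.
Qed.

Lemma pl_nat n : z n%:R = Some n%:R.
Proof.
elim: n => [|n IH]; first by rewrite pl0.
by rewrite -addn1 !natrD (plD IH pl1).
Qed.

Lemma pl_int (m : int) : z m%:~R = Some m%:~R.
Proof.
case: m => n; first exact: pl_nat.
by rewrite !NegzE !mulrNz; apply: plN; apply: pl_nat.
Qed.

Lemma pl_rat (q : rat) : z (ratr q) = Some (ratr q).
Proof.
rewrite /ratr.
have d0 : ((denq q)%:~R : RR) != 0 by rewrite intr_eq0 denq_neq0.
rewrite (plM (pl_int _) (pl_inv_some (pl_int _) d0)) //.
Qed.

Definition posv (a : K) := exists r, z a = Some r /\ 0 < r.

Lemma pos_itv (u a b : K) al be :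
  z a = Some al -> z b = Some be ->
  (posv (u - a) /\ posv (b - u) <-> exists t, z u = Some t /\ al < t < be).
Proof.
move=> ha hb; split.
  case=> [[r [hr r0]] [s [hs s0]]].
  case E: (z u) => [t|]; last by have := pl_none_add E (plN ha); rewrite hr.
  exists t; split => //.
  have := plB E ha; rewrite hr => -[] e1.
  have := plB hb E; rewrite hs => -[] e2.
  by move: r0 s0; rewrite e1 e2 !subr_gt0 => -> ->.
case=> t [E /andP[h1 h2]]; split.
  by exists (t - al); rewrite (plB E ha) subr_gt0.
by exists (be - t); rewrite (plB hb E) subr_gt0.
Qed.

Lemma pos_inf (u m : K) mu : u != 0 -> z m = Some mu -> 0 < mu ->
  (posv (u^-1 - - m) /\ posv (m - u^-1) <->
   z u = None \/ exists t, z u = Some t /\ mu^-1 < `|t|).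
Proof.
move=> u0 hm mu0; rewrite (pos_itv _ (plN hm) hm); split.
  case=> s [hs hb].
  case E: (z u) => [t|]; [right|by left].
  exists t; split => //.
  have [t0|t0] := eqVneq t 0.
    by have := pl_inv0 u0; rewrite E t0 hs => /(_ erefl).
  have := pl_inv_some E t0; rewrite hs => -[] st.
  rewrite st in hb.
  rewrite -ltr_norml normfV in hb.
  by rewrite -(invrK `|t|) ltf_pV2 ?posrE ?invr_gt0 ?normr_gt0.
case=> [E|[t [E ht]]].
  exists 0; split; first exact: pl_inv_none.
  by rewrite oppr_lt0 mu0.
have t0 : t != 0 by apply/eqP => t0; move: ht; rewrite t0 normr0 ltNge ltW // invr_gt0.
exists t^-1; split; first exact: pl_inv_some.
rewrite -ltr_norml normfV -(invrK mu) ltf_pV2 ?posrE ?invr_gt0 ?normr_gt0 //.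
Qed.

End Place.

Lemma pl_comp (K L : fieldType) (f : K -> L) (z : L -> option RR) :
  is_Rplace z -> is_fhom f -> is_Rplace (z \o f).
Proof.
move=> zP fh; have [f0 f1 fD fM fV] := fh; split => /=.
- by rewrite f0 pl0.
- by rewrite f1 pl1.
- by move=> a b r s ha hb; rewrite fD fM (plD zP ha hb) (plM zP ha hb).
- by move=> a a0; rewrite fV; apply: plV => //; apply: fhom_neq0.
Qed.

Lemma Mpl_eq (K : fieldType) (w1 w2 : Mpl K) : plv w1 =1 plv w2 -> w1 = w2.
Proof.
case: w1 w2 => f1 p1 [f2 p2] /= H.
have E : f1 = f2 by apply: functional_extensionality.
subst f2; congr exist; apply: proof_irrelevance.
Qed.


Section Sigma.
Variable K : fieldType.
Local Notation KY := {fraction {poly K}}.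
Definition cF := (@FracField.tofrac {poly K}) \o (@polyC K).
Definition sig_h (p : {poly K}) : KY := (map_poly cF p).[(yvar K)^-1].

Lemma yvar_neq0 : yvar K != 0.
Proof. by rewrite /yvar tofrac_eq0 polyX_eq0. Qed.

Lemma sig_hD : {morph sig_h : a b / a + b >-> a + b}.
Proof. by move=> a b; rewrite /sig_h rmorphD hornerD. Qed.
Lemma sig_hM : {morph sig_h : a b / a * b >-> a * b}.
Proof. by move=> a b; rewrite /sig_h rmorphM hornerM. Qed.
Lemma sig_h1 : sig_h 1 = 1.
Proof. by rewrite /sig_h rmorph1 hornerC. Qed.
Lemma sig_hC c : sig_h c%:P = (c%:P)%:F.
Proof. by rewrite /sig_h map_polyC hornerC. Qed.
Lemma sig_hX : sig_h 'X = (yvar K)^-1.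
Proof. by rewrite /sig_h map_polyX hornerX. Qed.

Lemma sig_h_aux p : p != 0 ->
  exists k (r : {poly K}), r.[0] != 0 /\ sig_h p * (yvar K) ^+ k = r%:F.
Proof.
elim/poly_ind: p => [|q c IH]; first by rewrite eqxx.
move=> p0.
have [q0|q0] := eqVneq q 0.
  move: p0; rewrite q0 mul0r add0r polyC_eq0 => c0.
  exists 0%N, c%:P; split; first by rewrite hornerC.
  by rewrite expr0 mulr1 sig_hC.
have [k [r [r0 E]]] := IH q0.
exists k.+1, (r + c%:P * 'X ^+ k.+1); split.
  by rewrite hornerD hornerM hornerXn expr0n /= mulr0 addr0.
rewrite sig_hD sig_hM sig_hX sig_hC mulrDl exprS.
rewrite mulrA -[sig_h q / _ * _]mulrA mulVf ?yvar_neq0 // mulr1 E.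
by rewrite tofracD tofracM tofracXn -exprS.
Qed.

Lemma sig_h_inj p : p != 0 -> sig_h p != 0.
Proof.
move=> p0; have [k [r [r0 E]]] := sig_h_aux p0.
apply/eqP => h0; move: E; rewrite h0 mul0r => /esym/eqP; rewrite tofrac_eq0.
by move=> /eqP r00; rewrite r00 horner0 eqxx in r0.
Qed.

Definition sigma : KY -> KY := liftf sig_h.

Lemma sigma_fhom : is_fhom sigma.
Proof. exact: (lift_fhom sig_hD sig_hM sig_h1 sig_h_inj). Qed.

Lemma sigma_poly p : sigma (p%:F) = sig_h p.
Proof. exact: (lift_poly sig_hM sig_h1 sig_h_inj). Qed.

Lemma sigmaC c : sigma ((c%:P)%:F) = (c%:P)%:F.
Proof. by rewrite sigma_poly sig_hC. Qed.
Lemma sigmaY : sigma (yvar K) = (yvar K)^-1.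
Proof. by rewrite /yvar sigma_poly sig_hX. Qed.

End Sigma.

Lemma hom_ext (K L : fieldType) (f g : {fraction {poly K}} -> L) :
  is_fhom f -> is_fhom g -> (forall c, f ((c%:P)%:F) = g ((c%:P)%:F)) ->
  f (yvar K) = g (yvar K) -> f =1 g.
Proof.
move=> [f0 f1 fD fM fV] [g0 g1 gD gM gV] hC hY.
have hP : forall p : {poly K}, f (p%:F) = g (p%:F).
  elim/poly_ind => [|q c IH]; first by rewrite tofrac0 f0 g0.
  by rewrite tofracD tofracM fD gD fM gM IH hC -hY.
move=> x; have [n [d [d0 ->]]] := fracP x.
by rewrite fM gM fV gV !hP.
Qed.

Lemma id_fhom (K : fieldType) : is_fhom (@id K).
Proof. by split. Qed.

Lemma sigmaK (K : fieldType) (x : {fraction {poly K}}) : sigma (sigma x) = x.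
Proof.
have [s0 s1 sD sM sV] := sigma_fhom K.
have := @hom_ext K _ (@sigma K \o @sigma K) id
  (fhom_comp (sigma_fhom K) (sigma_fhom K)) (@id_fhom _).
apply => [c|] /=; first by rewrite !sigmaC.
by rewrite sigmaY sV sigmaY invrK.
Qed.


Notation RY := {fraction {poly RR}}.

Definition Qfin (t : RR) (x : RY) : option RR :=
  match excluded_middle_informative
    (exists nd : {poly RR} * {poly RR}, nd.2.[t] != 0 /\ x = nd.1%:F / nd.2%:F) with
  | left H => let nd := proj1_sig (constructive_indefinite_description _ H) in
              Some (nd.1.[t] / nd.2.[t])
  | right _ => None
  end.

Lemma root_neq0 (p : {poly RR}) t : p.[t] != 0 -> p != 0.
Proof. by apply: contraNneq => ->; rewrite horner0. Qed.

Lemma QfinE t n d : d.[t] != 0 -> Qfin t (n%:F / d%:F) = Some (n.[t] / d.[t]).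
Proof.
move=> dt; rewrite /Qfin; case: excluded_middle_informative => [H|H]; last first.
  by exfalso; apply: H; exists (n, d).
case: constructive_indefinite_description => -[n' d'] /= [dt' E].
have E' := frac_eqE (root_neq0 dt) (root_neq0 dt') E.
have := congr1 (fun p => p.[t]) E'; rewrite /= !hornerM => E2.
congr Some; apply: (@mulIf _ (d.[t])) => //; apply: (@mulIf _ (d'.[t])) => //.
by rewrite divfK // -mulrA [d.[t] * _]mulrC mulrA divfK.
Qed.

Lemma QfinS t x v : Qfin t x = Some v ->
  exists n d, d.[t] != 0 /\ x = n%:F / d%:F /\ v = n.[t] / d.[t].
Proof.
rewrite /Qfin; case: excluded_middle_informative => [H|//].
case: constructive_indefinite_description => -[n' d'] /= [dt' E] [<-].
by exists n', d'.
Qed.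

Lemma QfinN t x : Qfin t x = None ->
  forall n d, d.[t] != 0 -> x <> n%:F / d%:F.
Proof.
move=> hx n d dt E; move: hx; rewrite E QfinE //.
Qed.

Lemma factor_out (p : {poly RR}) t : p != 0 ->
  exists i (p1 : {poly RR}), p = ('X - t%:P) ^+ i * p1 /\ p1.[t] != 0.
Proof.
move: {2}(size p) (leqnn (size p)) => n; elim: n p => [|n IH] p hs p0.
  by move: hs; rewrite leqn0 size_poly_eq0 (negbTE p0).
have [rt|nrt] := boolP (root p t); last by exists 0%N, p; rewrite expr0 mul1r.
have [q E] := factor_theorem _ _ rt.
have q0 : q != 0 by apply: contraNneq p0 => q0; rewrite E q0 mul0r.
have : (size q <= n)%N.
  move: hs; rewrite E size_mul ?polyXsubC_eq0 // size_XsubC addn2 /=.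
  by move=> h; rewrite -ltnS.
move=> /IH /(_ q0) [i [p1 [Eq h1]]].
by exists i.+1, p1; rewrite E Eq exprS mulrC mulrA.
Qed.

Lemma cancel_mid (F : fieldType) (a b c d : F) : b != 0 ->
  a * b * c / (b * d) = a * c / d.
Proof.
move=> b0; rewrite invfM -!mulrA; congr (_ * _).
by rewrite mulrCA mulVKf.
Qed.

Lemma Qfin_place t : is_Rplace (Qfin t).
Proof.
split.
- have -> : (0 : RY) = 0%:F / 1%:F by rewrite tofrac0 mul0r.
  by rewrite QfinE ?hornerC ?oner_eq0 // mul0r.
- have -> : (1 : RY) = 1%:F / 1%:F by rewrite tofrac1 divr1.
  by rewrite QfinE ?hornerC ?oner_eq0 // divr1.
- move=> a b r s /QfinS [n [d [dt [-> ->]]]] /QfinS [n' [d' [dt' [-> ->]]]].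
  have D : (d * d').[t] != 0 by rewrite hornerM mulf_neq0.
  have d0 := root_neq0 dt; have d'0 := root_neq0 dt'.
  split.
    rewrite addf_div ?tofrac_eq0 // -!tofracM -tofracD QfinE //.
    by rewrite hornerD !hornerM addf_div.
  by rewrite mulf_div -!tofracM QfinE // !hornerM mulf_div.
- move=> a a0; split.
    move=> ha; have [n [d [d0 E]]] := fracP a.
    have n0 : n != 0 by apply: contraNneq a0 => n0; rewrite E n0 tofrac0 mul0r.
    have [i [n1 [En hn1]]] := factor_out t n0.
    have [j [d1 [Ed hd1]]] := factor_out t d0.
    have [le_ji|lt_ij] := leqP j i.
      exfalso; apply: (QfinN ha (n := ('X - t%:P) ^+ (i - j) * n1) hd1).
      have Ei : ('X - t%:P) ^+ i = ('X - t%:P) ^+ (i - j) * ('X - t%:P) ^+ j.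
        by rewrite -exprD subnK.
      have hX : ((('X - t%:P) ^+ j)%:F : RY) != 0.
        by rewrite tofrac_eq0 expf_neq0 ?polyXsubC_eq0.
      by rewrite E En Ed Ei !tofracM (cancel_mid _ _ _ hX).
    have -> : a^-1 = (('X - t%:P) ^+ (j - i) * d1)%:F / n1%:F.
      have Ej : ('X - t%:P) ^+ j = ('X - t%:P) ^+ (j - i) * ('X - t%:P) ^+ i.
        by rewrite -exprD subnK // ltnW.
      have hX : ((('X - t%:P) ^+ i)%:F : RY) != 0.
        by rewrite tofrac_eq0 expf_neq0 ?polyXsubC_eq0.
      by rewrite E invf_div En Ed Ej !tofracM (cancel_mid _ _ _ hX).
    rewrite (QfinE _ hn1) hornerM horner_exp hornerXsubC subrr expr0n.
    have -> : (j - i == 0)%N = false by rewrite subn_eq0 leqNgt lt_ij.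
    by rewrite mul0r mul0r.
  move=> hv; case E: (Qfin t a) => [v|] //; exfalso.
  move: E => /QfinS [n [d [dt [Ea _]]]].
  move: hv => /QfinS [n' [d' [dt' [Eb v0]]]].
  have : a * a^-1 = 1 by rewrite mulfV.
  rewrite {1}Ea Eb mulf_div -!tofracM -tofrac1.
  move=> /(congr1 (fun u => u * (d * d')%:F)).
  rewrite divfK ?tofrac_eq0 ?mulf_neq0 ?(root_neq0 dt) ?(root_neq0 dt') //.
  rewrite mul1r => /eqP; rewrite tofrac_eq => /eqP /(congr1 (fun p => p.[t])).
  rewrite !hornerM.
  have -> : n'.[t] = 0.
    by apply/eqP; move: v0 => /esym/eqP; rewrite mulf_eq0 invr_eq0 (negbTE dt') orbF.
  by rewrite mulr0 => /esym/eqP; rewrite mulf_eq0 (negbTE dt) (negbTE dt').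
Qed.


Definition Qinf (x : RY) := Qfin 0 (sigma x).
Definition Qpl (t : option RR) : RY -> option RR :=
  match t with Some t => Qfin t | None => Qinf end.

Lemma Qpl_place t : is_Rplace (Qpl t).
Proof.
case: t => [t|] /=; first exact: Qfin_place.
exact: (pl_comp (Qfin_place 0) (sigma_fhom _)).
Qed.

Lemma Qfin_poly t p : Qfin t (p%:F) = Some p.[t].
Proof.
have -> : p%:F = p%:F / 1%:F by rewrite tofrac1 divr1.
by rewrite QfinE ?hornerC ?oner_eq0 // divr1.
Qed.

Lemma QplC t c : Qpl t ((c%:P)%:F) = Some c.
Proof. by case: t => [t|] /=; rewrite ?/Qinf ?sigmaC Qfin_poly hornerC. Qed.

Lemma QplY t : Qpl t (yvar RR) = t.
Proof.
case: t => [t|] /=; first by rewrite /yvar Qfin_poly hornerX.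
rewrite /Qinf sigmaY; apply: (pl_inv0 (Qfin_place 0)); first exact: yvar_neq0.
by rewrite /yvar Qfin_poly hornerX.
Qed.

Section FracMap.
Variables (K L : fieldType) (phi : {rmorphism K -> L}).
Let h := fun p : {poly K} => (map_poly phi p)%:F.
Let hD : {morph h : a b / a + b >-> a + b}.
Proof. by move=> a b; rewrite /h rmorphD tofracD. Qed.
Let hM : {morph h : a b / a * b >-> a * b}.
Proof. by move=> a b; rewrite /h rmorphM tofracM. Qed.
Let h1 : h 1 = 1.
Proof. by rewrite /h rmorph1 tofrac1. Qed.
Let hinj : forall p, p != 0 -> h p != 0.
Proof. by move=> p p0; rewrite /h tofrac_eq0 map_poly_eq0. Qed.

Lemma frac_map_fhom : is_fhom (frac_map phi).
Proof. exact: (lift_fhom hD hM h1 hinj). Qed.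

Lemma frac_map_poly p : frac_map phi (p%:F) = (map_poly phi p)%:F.
Proof. exact: (lift_poly hM h1 hinj). Qed.

Lemma frac_mapC c : frac_map phi ((c%:P)%:F) = ((phi c)%:P)%:F.
Proof. by rewrite frac_map_poly map_polyC. Qed.

Lemma frac_mapY : frac_map phi (yvar K) = yvar L.
Proof. by rewrite /yvar frac_map_poly map_polyX. Qed.

End FracMap.

Section FracMapR.
Variables (K : fieldType) (phi : {rmorphism K -> RR}).

Lemma frac_map_sigma x : frac_map phi (sigma x) = sigma (frac_map phi x).
Proof.
have [f0 f1 fD fM fV] := frac_map_fhom phi.
apply: (hom_ext (fhom_comp (sigma_fhom K) (frac_map_fhom phi))
  (fhom_comp (frac_map_fhom phi) (sigma_fhom _))) => [c|] /=.
  by rewrite sigmaC frac_mapC sigmaC.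
by rewrite sigmaY fV frac_mapY sigmaY.
Qed.

Definition Pl (t : option RR) : {fraction {poly K}} -> option RR :=
  Qpl t \o frac_map phi.

Lemma Pl_place t : is_Rplace (Pl t).
Proof. exact: (pl_comp (Qpl_place t) (frac_map_fhom phi)). Qed.

Lemma PlC t c : Pl t ((c%:P)%:F) = Some (phi c).
Proof. by rewrite /Pl /= frac_mapC QplC. Qed.

Lemma PlY t : Pl t (yvar K) = t.
Proof. by rewrite /Pl /= frac_mapY QplY. Qed.

End FracMapR.

Lemma frac_map_id (x : RY) : frac_map (@idfun RR) x = x.
Proof.
have := hom_ext (frac_map_fhom (@idfun RR)) (@id_fhom _).
by apply => [c|]; rewrite ?frac_mapC ?frac_mapY.
Qed.


Section Uniq.
Variables (K : fieldType) (phi : {rmorphism K -> RR}).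

Definition constsP (w : {fraction {poly K}} -> option RR) :=
  forall c, w ((c%:P)%:F) = Some (phi c).

Lemma wpoly w t : is_Rplace w -> constsP w -> w (yvar K) = Some t ->
  forall p, w (p%:F) = Some ((map_poly phi p).[t]).
Proof.
move=> wP wC wY; elim/poly_ind => [|q c IH].
  by rewrite tofrac0 (pl0 wP) rmorph0 horner0.
rewrite tofracD tofracM (plD wP (plM wP IH wY) (wC c)).
by rewrite rmorphD rmorphM /= map_polyX map_polyC hornerMXaddC.
Qed.

Lemma wfrac w t n d : is_Rplace w -> constsP w -> w (yvar K) = Some t ->
  coprimep n d -> d != 0 ->
  w (n%:F / d%:F) = if (map_poly phi d).[t] == 0 then None
                    else Some ((map_poly phi n).[t] / (map_poly phi d).[t]).
Proof.
move=> wP wC wY cop d0.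
have wp := wpoly wP wC wY.
case: eqP => [dt|/eqP dt].
  have cop' : coprimep (map_poly phi d) (map_poly phi n) by rewrite coprimep_map coprimep_sym.
  have nt : (map_poly phi n).[t] != 0.
    by apply: (coprimep_root cop'); rewrite /root dt.
  have n0 : n != 0 by apply: contraNneq nt => ->; rewrite rmorph0 horner0.
  apply/(plV wP).
    by rewrite mulf_neq0 ?invr_eq0 ?tofrac_eq0.
  rewrite invf_div (plM wP (wp d) (pl_inv_some wP (wp n) nt)) dt mul0r //.
by rewrite (plM wP (wp n) (pl_inv_some wP (wp d) dt)).
Qed.

Lemma uniq_fin w t : is_Rplace w -> constsP w -> w (yvar K) = Some t ->
  w =1 Pl phi (Some t).
Proof.
move=> wP wC wY x.
have [n [d [d0 ->]]] := fracP x.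
set g := gcdp n d.
have g0 : g != 0 by rewrite gcdp_eq0 negb_and d0 orbT.
have En : n = (n %/ g) * g by rewrite divpK // dvdp_gcdl.
have Ed : d = (d %/ g) * g by rewrite divpK // dvdp_gcdr.
have d'0 : d %/ g != 0 by apply: contraNneq d0 => h; rewrite Ed h mul0r.
have cop : coprimep (n %/ g) (d %/ g) by apply: coprimep_div_gcd; rewrite d0 orbT.
have -> : n%:F / d%:F = (n %/ g)%:F / (d %/ g)%:F.
  rewrite {1}En {1}Ed !tofracM invfM mulrACA mulfV ?tofrac_eq0 // mulr1.
  by [].
rewrite (wfrac wP wC wY cop d'0).
rewrite (wfrac (Pl_place phi (Some t)) (PlC phi (Some t)) (PlY phi (Some t)) cop d'0).
by [].
Qed.

Lemma uniq_place w : is_Rplace w -> constsP w -> w =1 Pl phi (w (yvar K)).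
Proof.
move=> wP wC; case E: (w (yvar K)) => [t|]; first exact: uniq_fin.
have w'P := pl_comp wP (sigma_fhom K).
have w'C : constsP (w \o @sigma K).
  by move=> c /=; rewrite sigmaC.
have w'Y : (w \o @sigma K) (yvar K) = Some 0.
  by rewrite /= sigmaY (pl_inv_none wP E).
have U := uniq_fin w'P w'C w'Y.
move=> x; rewrite -(sigmaK x); have := U (sigma x) => /= ->.
by rewrite /Pl /= sigmaK frac_map_sigma.
Qed.

End Uniq.


Lemma rat_between (x y : RR) : x < y -> exists q : rat, x < ratr q < y.
Proof.
move=> xy; have [q hq] := reals.rat_in_itvoo xy.
by exists q; move: hq; rewrite in_itv.
Qed.

Section Const.
Variables (K : fieldType) (phi : {rmorphism K -> RR}) (u : K -> option RR).
Hypotheses (uP : is_Rplace u)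
  (H1 : forall c : K, exists (d : K) (n : nat), c * c + d * d = n%:R)
  (H2 : forall c : K, 0 <= phi c -> exists d : K, c = d * d).

Lemma const_fin c : exists r, u c = Some r.
Proof.
case E: (u c) => [r|]; first by exists r.
exfalso.
have c0 : c != 0 by apply/eqP => c0; rewrite c0 (pl0 uP) in E.
have ci := pl_inv_none uP E.
have cci : u ((c * c)^-1) = Some 0 by rewrite invfM (plM uP ci ci) mulr0.
have [d [n Hn]] := H1 c.
set e := d / c.
have key : n%:R / (c * c) = 1 + e * e.
  by rewrite -Hn mulrDl mulfV ?mulf_neq0 // /e mulf_div.
have un : u (n%:R / (c * c)) = Some 0 by rewrite (plM uP (pl_nat uP n) cci) mulr0.
rewrite key in un.
case Ee: (u e) => [s|].
  move: un; rewrite (plD uP (pl1 uP) (plM uP Ee Ee)) => -[] /eqP.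
  by rewrite gt_eqF // ltr_pwDl // sqr_ge0.
have e0 : e != 0 by apply/eqP => e0; rewrite e0 (pl0 uP) in Ee.
have ei := pl_inv_none uP Ee.
have eei : u ((e * e)^-1) = Some 0 by rewrite invfM (plM uP ei ei) mulr0.
have ee : u (e * e) = None.
  by apply/(plV uP (mulf_neq0 e0 e0)).
by move: un; rewrite addrC (pl_none_add uP ee (pl1 uP)).
Qed.

Lemma const_pos c r : 0 <= phi c -> u c = Some r -> 0 <= r.
Proof.
move=> /H2 [d ->]; have [s hs] := const_fin d.
by rewrite (plM uP hs hs) => -[] <-; rewrite sqr_ge0.
Qed.

Lemma const_eq c : u c = Some (phi c).
Proof.
have [r hr] := const_fin c; rewrite hr; congr Some.
have [lt|gt|//] := ltgtP r (phi c).
  have [q /andP [h1 h2]] := rat_between lt.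
  have : 0 <= phi (c - ratr q) by rewrite rmorphB fmorph_rat subr_ge0 ltW.
  move=> /const_pos /(_ (plB uP hr (pl_rat uP q))).
  by rewrite subr_ge0 leNgt h1.
have [q /andP [h1 h2]] := rat_between gt.
have : 0 <= phi (ratr q - c) by rewrite rmorphB fmorph_rat subr_ge0 ltW.
move=> /const_pos /(_ (plB uP (pl_rat uP q) hr)).
by rewrite subr_ge0 leNgt h2.
Qed.

End Const.


Section GoodR.
Variables (R : archiRcfType) (F : fieldType)
  (iR : {rmorphism R -> F}) (iF : {rmorphism F -> RR}).

Definition phiR : {rmorphism R -> RR} := iF \o iR.

Lemma goodR_H1 (c : R) : exists (d : R) (n : nat), c * c + d * d = n%:R.
Proof.
have hc : 0 <= c * c by rewrite -expr2 sqr_ge0.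
have := archi_boundP hc; set n := Num.Def.archi_bound _ => hn.
exists (Num.ExtraDef.sqrtr (n%:R - c * c)), n.
by rewrite -[X in _ + X]expr2 sqr_sqrtr ?subr_ge0 ?ltW // addrC subrK.
Qed.

Lemma goodR_H2 (c : R) : 0 <= phiR c -> exists d : R, c = d * d.
Proof.
move=> hc; have [c0|c0] := leP 0 c.
  by exists (Num.ExtraDef.sqrtr c); rewrite -[RHS]expr2 sqr_sqrtr.
exfalso.
have nc : 0 < - c by rewrite oppr_gt0.
have E : - c = Num.ExtraDef.sqrtr (- c) * Num.ExtraDef.sqrtr (- c) by rewrite -[RHS]expr2 sqr_sqrtr ?ltW.
have : phiR (- c) != 0.
  by rewrite fmorph_eq0 oppr_eq0 lt_eqF.
have : 0 <= phiR (- c) by rewrite E rmorphM -expr2 sqr_ge0.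
rewrite rmorphN oppr_ge0 oppr_eq0 => h1 h2.
by move: h2; rewrite eq_le h1 hc.
Qed.

End GoodR.

Section GoodF.
Variables (F : fieldType) (iF : {rmorphism F -> RR}).
Hypothesis rc : real_closed_sub iF.

Lemma goodF_H2 (c : F) : 0 <= iF c -> exists d : F, c = d * d.
Proof.
move=> hc.
have := rc (p := 'X * 'X - c%:P) (a := 0) (b := c + 1).
rewrite rmorph0 rmorphD rmorph1 => /(_ (addr_ge0 hc ler01)).
rewrite rmorphB rmorphM /= map_polyX map_polyC /= !hornerE.
have h1 : - iF c <= 0 by rewrite oppr_le0.
have h2 : 0 <= (iF c + 1) * (iF c + 1) - iF c by nra.
move=> /(_ h1 h2) [x _]; rewrite /root !hornerE subr_eq0 => /eqP <-.
by exists x.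
Qed.

Lemma goodF_H1 (c : F) : exists (d : F) (n : nat), c * c + d * d = n%:R.
Proof.
have hc : 0 <= iF (c * c) by rewrite rmorphM -expr2 sqr_ge0.
have := archi_boundP hc; set n := Num.Def.archi_bound _ => hn.
have : 0 <= iF (n%:R - c * c) by rewrite rmorphB rmorph_nat subr_ge0 ltW.
move=> /goodF_H2 [d hd]; exists d, n.
by rewrite -hd addrC subrK.
Qed.

End GoodF.


Lemma Qfin_open t x r : Qfin t x = Some r -> 0 < r ->
  exists2 del : RR, 0 < del & forall t', `|t' - t| < del ->
    exists r', Qfin t' x = Some r' /\ 0 < r'.
Proof.
move=> /QfinS [n [d [dt [-> ->]]]] r0.
set p := n * d.
have pt : 0 < p.[t].
  have -> : p.[t] = n.[t] / d.[t] * (d.[t] * d.[t]).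
    by rewrite /p hornerM mulrA divfK.
  by rewrite mulr_gt0 // -expr2 exprn_even_gt0 //= dt.
have [del del0 H] := poly_cont t p pt.
exists del => // t' ht'.
have pt' : 0 < p.[t'].
  have := H _ ht'; rewrite ltr_norml => /andP [h1 _].
  by move: h1 pt; set u := p.[t']; set v := p.[t]; lra.
have dt' : d.[t'] != 0.
  by apply: contraTneq pt' => h; rewrite /p hornerM h mulr0 ltxx.
exists (n.[t'] / d.[t']); split; first by rewrite QfinE.
have -> : n.[t'] / d.[t'] = p.[t'] / (d.[t'] * d.[t']).
  by rewrite /p hornerM invfM mulrA mulfK.
by rewrite divr_gt0 // -expr2 exprn_even_gt0 //= dt'.
Qed.

Lemma Qfin_swap t x : t != 0 -> Qfin t x = Qfin t^-1 (sigma x).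
Proof.
move=> t0.
have WP := pl_comp (Qfin_place t^-1) (sigma_fhom RR).
have WC : constsP (@idfun RR) (Qfin t^-1 \o @sigma RR).
  by move=> c /=; rewrite sigmaC Qfin_poly hornerC.
have U := uniq_place WP WC.
have WY : (Qfin t^-1 \o @sigma RR) (yvar RR) = Some t.
  rewrite /= sigmaY (pl_inv_some (Qfin_place t^-1) _ (invr_neq0 t0)) ?invrK //.
  by rewrite /yvar Qfin_poly hornerX.
have := U x; rewrite WY /Pl /= frac_map_id => ->.
by [].
Qed.

Lemma Qinf_open x r : Qinf x = Some r -> 0 < r ->
  exists2 M : RR, 0 < M & forall t', M < `|t'| ->
    exists r', Qfin t' x = Some r' /\ 0 < r'.
Proof.
move=> hx r0; have [del del0 H] := Qfin_open hx r0.
exists del^-1; first by rewrite invr_gt0.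
move=> t' ht'.
have t0 : t' != 0.
  by apply: contraTneq ht' => ->; rewrite normr0 -leNgt ltW // invr_gt0.
rewrite (Qfin_swap x t0); apply: H.
rewrite subr0 normfV -(invrK del) ltf_pV2 ?posrE ?invr_gt0 ?normr_gt0 //.
Qed.


Section Cont.
Variables (A B : fieldType) (phiB : {rmorphism B -> RR}).
Local Notation AY := {fraction {poly A}}.
Local Notation BY := {fraction {poly B}}.

Lemma local_nbhd (z : Mpl AY) (b : BY) :
  posv (Pl phiB (plv z (yvar A))) b ->
  exists cs : seq AY, (forall c, c \in cs -> Hsub c z) /\
    (forall w : Mpl AY, (forall c, c \in cs -> Hsub c w) ->
       posv (Pl phiB (plv w (yvar A))) b).
Proof.
have zP : is_Rplace (plv z) := proj2_sig z.
case E: (plv z (yvar A)) => [t|] [r [hr r0]].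
  have [del del0 H] := Qfin_open hr r0.
  have [a /andP [a1 a2]] : exists a : rat, t - del < ratr a < t.
    have h : t - del < t by lra.
    exact: rat_between h.
  have [a' /andP [a'1 a'2]] : exists a : rat, t < ratr a < t + del.
    have h : t < t + del by lra.
    exact: rat_between h.
  exists [:: yvar A - ratr a; ratr a' - yvar A]; split.
    have : posv (plv z) (yvar A - ratr a) /\ posv (plv z) (ratr a' - yvar A).
      apply/(pos_itv zP _ (pl_rat zP a) (pl_rat zP a')).
      by exists t; rewrite E a2 a'1.
    by case=> h1 h2 c; rewrite !inE => /orP [] /eqP ->.
  move=> w hw; have wP : is_Rplace (plv w) := proj2_sig w.
  have : posv (plv w) (yvar A - ratr a) /\ posv (plv w) (ratr a' - yvar A).
    by split; apply: hw; rewrite !inE eqxx ?orbT.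
  move=> /(pos_itv wP _ (pl_rat wP a) (pl_rat wP a')) [t' [-> /andP [h1 h2]]].
  apply: (H t'); rewrite ltr_norml; apply/andP; split; lra.
have [M M0 H] := Qinf_open hr r0.
have hM : (0 : RR) < M^-1 by rewrite invr_gt0.
have [m hm] := rat_between hM.
move: hm => /andP [m1 m2].
have y0 : yvar A != 0 by exact: yvar_neq0.
exists [:: (yvar A)^-1 - - ratr m; ratr m - (yvar A)^-1]; split.
  have : posv (plv z) ((yvar A)^-1 - - ratr m) /\ posv (plv z) (ratr m - (yvar A)^-1).
    by apply/(pos_inf zP y0 (pl_rat zP m) m1); left.
  by case=> h1 h2 c; rewrite !inE => /orP [] /eqP ->.
move=> w hw; have wP : is_Rplace (plv w) := proj2_sig w.
have : posv (plv w) ((yvar A)^-1 - - ratr m) /\ posv (plv w) (ratr m - (yvar A)^-1).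
  by split; apply: hw; rewrite !inE eqxx ?orbT.
move=> /(pos_inf wP y0 (pl_rat wP m) m1) [->|[t' [-> ht']]].
  by exists r.
apply: H; apply: lt_trans ht'.
by rewrite -(invrK M) ltf_pV2 ?posrE ?invr_gt0.
Qed.

Lemma cont_gen (f : Mpl AY -> Mpl BY) :
  (forall z, plv (f z) =1 Pl phiB (plv z (yvar A))) -> Mcontinuous f.
Proof.
move=> Hf V Vo z Vz.
have [bs [hbs hV]] := Vo _ Vz.
suff [cs [h1 h2]] : exists cs : seq AY, (forall c, c \in cs -> Hsub c z) /\
    (forall w : Mpl AY, (forall c, c \in cs -> Hsub c w) ->
       forall b, b \in bs -> Hsub b (f w)).
  by exists cs; split => // w hw; apply: hV; apply: h2.
elim: bs hbs {hV} => [|b bs IH] hbs.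
  by exists [::]; split.
have [cs2 [h21 h22]] : exists cs : seq AY, (forall c, c \in cs -> Hsub c z) /\
    (forall w : Mpl AY, (forall c, c \in cs -> Hsub c w) ->
       forall b, b \in bs -> Hsub b (f w)).
  by apply: IH => b' hb'; apply: hbs; rewrite inE hb' orbT.
have hb : posv (Pl phiB (plv z (yvar A))) b.
  have := hbs b (mem_head _ _); rewrite /Hsub.
  by case=> r [hr r0]; exists r; rewrite -Hf.
have [cs1 [h11 h12]] := local_nbhd hb.
exists (cs1 ++ cs2); split.
  by move=> c; rewrite mem_cat => /orP [] ?; [apply: h11 | apply: h21].
move=> w hw b'; rewrite inE => /orP [/eqP ->|hb'].
  have [r [hr r0]] := h12 w (fun c hc => hw c ltac:(by rewrite mem_cat hc)).
  by exists r; rewrite Hf.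
by apply: h22 => // c hc; apply: hw; rewrite mem_cat hc orbT.
Qed.

End Cont.


Lemma rmorph_fhom (K L : fieldType) (f : {rmorphism K -> L}) : is_fhom f.
Proof.
split; [exact: rmorph0|exact: rmorph1|exact: rmorphD|exact: rmorphM|].
exact: fmorphV.
Qed.

Lemma consts_all (K : fieldType) (phi : {rmorphism K -> RR})
  (w : {fraction {poly K}} -> option RR) : is_Rplace w ->
  (forall c : K, exists (d : K) (n : nat), c * c + d * d = n%:R) ->
  (forall c : K, 0 <= phi c -> exists d : K, c = d * d) ->
  constsP phi w.
Proof.
move=> wP H1 H2 c.
have uP := pl_comp wP (rmorph_fhom (@cF K)).
exact: (const_eq uP H1 H2 c).
Qed.

Unset Implicit Arguments.
Theorem lemma6p1 (R : archiRcfType) (F : fieldType)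
  (iR : {rmorphism R -> F}) (iF : {rmorphism F -> RR}) :
  exists iota : Mpl {fraction {poly R}} -> Mpl {fraction {poly F}},
    (* iota z = z_F: identity on F, and y ↦ z(y) *)
        (forall z, (forall c : F, plv (iota z) ((c%:P)%:F) = Some (iF c))
                   /\ plv (iota z) (yvar F) = plv z (yvar R)) /\
        (* z_F is the unique such R-place *)
        (forall z (w : Mpl {fraction {poly F}}),
            (forall c : F, plv w ((c%:P)%:F) = Some (iF c)) ->
            plv w (yvar F) = plv z (yvar R) -> w = iota z) /\
        Mcontinuous iota /\
        injective iota /\
        (* compatible with restriction *)
        (forall z x, plv (iota z) (frac_map iR x) = plv z x) /\
        (* homeomorphism onto M(F(y)) when F is real closed *)
        (real_closed_sub iF ->
           exists2 g : Mpl {fraction {poly F}} -> Mpl {fraction {poly R}},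
             cancel iota g /\ cancel g iota & Mcontinuous g).
Proof.
pose phR := phiR iR iF.
pose iota := fun z : Mpl {fraction {poly R}} =>
  exist _ (Pl iF (plv z (yvar R))) (Pl_place iF _) : Mpl {fraction {poly F}}.
have zR : forall z : Mpl {fraction {poly R}}, plv z =1 Pl phR (plv z (yvar R)).
  move=> z; have zP : is_Rplace (plv z) := proj2_sig z.
  apply: uniq_place => //; apply: consts_all => //.
    exact: goodR_H1.
  exact: goodR_H2.
exists iota; split.
  by move=> z; split; [move=> c; exact: PlC | exact: PlY].
split.
  move=> z w wC wY; apply: Mpl_eq => x.
  have wP : is_Rplace (plv w) := proj2_sig w.
  by rewrite (uniq_place wP wC) wY.
split.
  by apply: (cont_gen (phiB := iF)) => z x.
split.
  move=> z1 z2 E; apply: Mpl_eq => x.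
  have : plv (iota z1) (yvar F) = plv (iota z2) (yvar F) by rewrite E.
  rewrite /= !PlY => EY.
  by rewrite zR EY -zR.
split.
  move=> z x.
  have WP := pl_comp (Pl_place iF (plv z (yvar R))) (frac_map_fhom iR).
  have WC : constsP phR (Pl iF (plv z (yvar R)) \o frac_map iR).
    by move=> c /=; rewrite frac_mapC PlC.
  have := uniq_place WP WC x => /= ->.
  by rewrite frac_mapY PlY -zR.
move=> rc.
pose g := fun w : Mpl {fraction {poly F}} =>
  exist _ (Pl phR (plv w (yvar F))) (Pl_place phR _) : Mpl {fraction {poly R}}.
exists g; last by apply: (cont_gen (phiB := phR)) => w x.
split.
  move=> z; apply: Mpl_eq => x /=.
  by rewrite PlY -zR.
move=> w; apply: Mpl_eq => x /=.
have wP : is_Rplace (plv w) := proj2_sig w.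
rewrite PlY; symmetry; apply: uniq_place => //.
apply: consts_all => //; [exact: (goodF_H1 rc) | exact: (goodF_H2 rc)].
Qed.
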